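(* Let $D$ be a 2-connected rooted digraph with root $r$. Then there exists an $r-r$ numbering of $D$, that is, a linear ordering $\sigma$ of $V(D)\setminus\{r\}$ such that for every vertex $x\neq r$, either $x$ is an outneighbour of $r$, or there exist two in-neighbours $u$ and $v$ of $x$ with $\sigma(u)<\sigma(x)<\sigma(v)$.
   Context: A rooted digraph is a loopless digraph $D$ with a distinguished vertex $r$ (the root) such that: there is no arc $(u,r)$ for any $u\in V(D)$; there is no arc $(x,y)$ with $x\neq r$ and $y$ an outneighbour of $r$; and $r$ has outdegree at least 2. A cut of a rooted digraph $D$ is a set $S\subseteq V(D)\setminus\{r\}$ such that some vertex $z\notin S$ is not the endpoint of any directed path starting at $r$ in $D-S$. $D$ is 2-connected if it has no cut of size at most 1 (in particular, the empty set is not a cut, so every vertex is reachable from $r$). *)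

(* Defs.v *)
From mathcomp Require Import all_boot.
Set Implicit Arguments. Unset Strict Implicit. Unset Printing Implicit Defensive.

Definition rooted_digraph (V : finType) (e : rel V) (r : V) : Prop :=
  [/\ (forall x, ~~ e x x),
      (forall u, ~~ e u r),
      (forall x y, x != r -> e r y -> ~~ e x y)
    & 2 <= #|[set y | e r y]|].

Definition del_rel (V : finType) (e : rel V) (S : {set V}) : rel V :=
  [rel x y | [&& e x y, x \notin S & y \notin S]].

Definition is_cut (V : finType) (e : rel V) (r : V) (S : {set V}) : Prop :=
  r \notin S /\ exists z, z \notin S /\ ~~ connect (del_rel e S) r z.

Definition two_connected (V : finType) (e : rel V) (r : V) : Prop :=
  forall S : {set V}, #|S| <= 1 -> ~ is_cut e r S.

(* An r-r numbering: sigma is a linear ordering of V \ {r} (an injective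
   map into nat restricted to vertices other than r) such that every x <> r
   is an outneighbour of r or has in-neighbours u, v with
   sigma u < sigma x < sigma v. *)
Definition rr_numbering (V : finType) (e : rel V) (r : V) (sigma : V -> nat) : Prop :=
  (forall x y, x != r -> y != r -> sigma x = sigma y -> x = y) /\
  forall x, x != r ->
    e r x \/ exists u v, [/\ u != r, v != r, e u x, e v x &
                            sigma u < sigma x < sigma v].

(* Main.v *)
Require Import Defs.
From mathcomp Require Import all_boot.
Set Implicit Arguments. Unset Strict Implicit. Unset Printing Implicit Defensive.

From mathcomp Require Import zify.
Lemma L1 (p q y : nat) : (if p < q then 3*q-1 else 3*q+1) <> 3*y.
Proof. case: ifP => h; lia. Qed.
Lemma L2 (p q x : nat) : q < x -> (if p < q then 3*q-1 else 3*q+1) < 3*x.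
Proof. case: ifP => h; lia. Qed.
Lemma L3 (p q x : nat) : x < q -> 3*x < (if p < q then 3*q-1 else 3*q+1).
Proof. case: ifP => h; lia. Qed.
Lemma L4 (p q : nat) : p < q -> 3*p < (if p < q then 3*q-1 else 3*q+1) < 3*q.
Proof. move=> h; rewrite h; lia. Qed.
Lemma L5 (p q : nat) : q < p -> 3*q < (if p < q then 3*q-1 else 3*q+1) < 3*p.
Proof. move=> h; case: ifP => h'; lia. Qed.
Lemma L6 (p q : nat) : 3*p = 3*q -> p = q.
Proof. lia. Qed.
Lemma L7 (p q : nat) : p < q -> 3*p < 3*q.
Proof. lia. Qed.

Lemma conn_ind (T : finType) (e : rel T) (P : T -> bool) x y :
  P x -> (forall u v, P u -> e u v -> P v) -> connect e x y -> P y.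
Proof.
move=> Px H /connectP [p pth ->]; elim: p x Px pth => //= v p IH x Px /andP[exv pth].
exact: IH (H _ _ Px exv) pth.
Qed.

Lemma reach (V : finType) (e : rel V) r (S : {set V}) z : two_connected e r -> #|S| <= 1 ->
  r \notin S -> z \notin S -> connect (del_rel e S) r z.
Proof.
move=> h2 hS rS zS; case: (boolP (connect _ r z)) => // nc; exfalso.
by apply: (h2 S hS); split => //; exists z.
Qed.

Section Pair.
Variables (V : finType) (e : rel V) (r : V).

Definition R2 (a w v : V) := connect (del_rel e [set a; w]) r v.

Definition Zset (a w : V) : {set V} :=
  [set z | [&& z != a, z != w & ~~ R2 a w z]].

Lemma shrink a w z0 : rooted_digraph e r -> two_connected e r -> e r a -> e a w ->
  ~~ e r w -> z0 \in Zset a w ->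
  exists z1, [/\ e a z1, ~~ e r z1 & Zset a z1 \proper Zset a w].
Proof.
case=> loopl nor nin _ h2 era eaw nrw.
rewrite inE => /and3P [z0a z0w z0R].
have ra : r != a by apply/eqP => ra; move: (loopl r); rewrite {2}ra era.
have rw : r != w by apply/eqP => rw; move: (nor a); rewrite rw eaw.
have aw : a != w by apply/eqP => aw; move: (loopl a); rewrite {2}aw eaw.
have R2r : R2 a w r by exact: connect0.
have R2step : forall u v, R2 a w u -> e u v -> u != a -> u != w -> v != a -> v != w -> R2 a w v.
  move=> u v Ru euv ua uw va vw; apply: connect_trans Ru (connect1 _).
  by rewrite /del_rel /= euv !inE negb_or ua uw negb_or va vw.
have [z1 /and4P [z1a z1w z1R eaz1]] :
    exists z1, [&& z1 != a, z1 != w, ~~ R2 a w z1 & e a z1].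
  have : [|| R2 a w z0, z0 == a | [exists z, [&& z != a, z != w, ~~ R2 a w z & e a z]]].
  apply: (@conn_ind _ (del_rel e [set w])
    (fun v => [|| R2 a w v, v == a | [exists z, [&& z != a, z != w, ~~ R2 a w z & e a z]]]) r z0).
  + by rewrite R2r.
  + move=> u v /= Pu /and3P [euv]; rewrite !inE => uw vw; rewrite /=.
    have [ua|ua] := eqVneq u a.
      subst u; case: (boolP (R2 a w v)) => [Rv|nRv]; first by apply/or3P; apply: Or31.
      have [va|va] := eqVneq v a; first by [].
      by apply/or3P; apply: Or33; apply/existsP; exists v; rewrite va vw nRv euv.
    case/or3P: Pu => [Ru|ua'|Ex]; [ | by rewrite ua' in ua | by apply/or3P; apply: Or33].
    have [va2|va] := eqVneq v a; first by rewrite orbT.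
    by rewrite (R2step u v).
  + by apply: reach; rewrite ?cards1 ?inE // eq_sym.
  move=> /= /or3P [h|h|h]; [by rewrite h in z0R | by rewrite h in z0a | exact/existsP].
have nrz1 : ~~ e r z1.
  apply: contra z1R => erz; rewrite /R2; apply: connect1.
  by rewrite /del_rel /= erz !inE !negb_or ra rw z1a z1w.
have Ri : forall v, R2 a w v -> R2 a z1 v.
  move=> v Rv; suff /andP[] : R2 a w v && R2 a z1 v by [].
  apply: (@conn_ind _ (del_rel e [set a; w]) (fun v => R2 a w v && R2 a z1 v) r v) => //=.
  - by rewrite R2r; apply: connect0.
  - move=> u x /andP[Ru Ru1] /and3P[eux]; rewrite !inE !negb_or => /andP[ua uw] /andP[xa xw].
    have Rx : R2 a w x by apply: R2step Ru eux ua uw xa xw.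
    rewrite Rx /=; apply: connect_trans Ru1 (connect1 _).
    rewrite /del_rel /= eux !inE !negb_or ua xa /=.
    by apply/andP; split; apply/eqP => h; move: z1R; rewrite -h ?Ru ?Rx.
have Rw : R2 a z1 w.
  pose e2 : rel V := fun x y => del_rel e [set a] x y && (x != w).
  have c1 : connect (del_rel e [set a]) r w.
    by apply: reach; rewrite ?cards1 ?inE // eq_sym.
  have c2 : connect e2 r w.
    have /orP[]// : connect e2 r w || connect e2 r w.
    refine (@conn_ind _ (del_rel e [set a]) (fun v => connect e2 r v || connect e2 r w) r w _ _ c1).
      by rewrite /= connect0.
    move=> u x /orP[cu|->]; last by rewrite orbT.
    move=> ex; have [uw|uw] := eqVneq u w; first by rewrite -uw cu orbT.
    by apply/orP; left; apply: connect_trans cu (connect1 _); rewrite /e2 /= ex uw.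
  suff /andP[] : R2 a z1 w && ((w != w) ==> R2 a w w) by [].
  apply: (@conn_ind _ e2 (fun v => R2 a z1 v && ((v != w) ==> R2 a w v)) r w _ _ c2) => /=.
    by apply/andP; split; [exact: connect0 | by rewrite R2r implybT].
  move=> u x /andP[Ru1 Ruw] /andP[/and3P[eux]]; rewrite !inE => ua xa uw.
  have Ru : R2 a w u by move: Ruw; rewrite uw.
  have uz : u != z1 by apply/eqP => h; move: z1R; rewrite -h Ru.
  have Rx : x != w -> R2 a w x by move=> xw; apply: R2step Ru eux ua uw xa xw.
  have xz : x != z1.
    by apply/eqP => h; move: Rx; rewrite h => /(_ z1w); rewrite (negbTE z1R).
  apply/andP; split; last by apply/implyP.
  apply: connect_trans Ru1 (connect1 _).
  by rewrite /del_rel /= eux !inE !negb_or ua uz xa xz.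
exists z1; split => //; apply/properP; split.
  apply/subsetP => y; rewrite !inE => /and3P[ya yz1 nR]; rewrite ya /=.
  apply/andP; split; first by apply/eqP => yw; move: nR; rewrite yw Rw.
  by apply: contra nR; exact: Ri.
by exists z1; rewrite !inE ?eqxx ?andbF // z1a z1w z1R.
Qed.
Lemma good_pair : rooted_digraph e r -> two_connected e r ->
  (exists y, (y != r) && ~~ e r y) ->
  exists a w, [/\ e r a, e a w, ~~ e r w & forall z, z != a -> z != w -> R2 a w z].
Proof.
move=> hr h2 [y /andP[yr nry]].
have [a0 [w0 [era0 eaw0 nrw0]]] : exists a w, [/\ e r a, e a w & ~~ e r w].
  have : [|| y == r, e r y | [exists a, exists w, [&& e r a, e a w & ~~ e r w]]].
    refine (@conn_ind _ (del_rel e set0) (fun v => [|| v == r, e r v | [exists a, exists w, [&& e r a, e a w & ~~ e r w]]]) r y _ _ _).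
    - by rewrite /= eqxx.
    - move=> u v /= /or3P[/eqP->|eru|->] /and3P[euv _ _]; rewrite ?orbT //=.
        by rewrite euv orbT.
      case: (boolP (e r v)) => [erv|nrv]; first by apply/or3P/Or32.
      by apply/or3P/Or33; apply/existsP; exists u; apply/existsP; exists v; rewrite eru euv nrv.
    - by apply: reach; rewrite ?cards0 ?inE.
  case/or3P => [h|h|]; [by rewrite h in yr | by rewrite h in nry | ].
  by case/existsP => a /existsP [w /and3P[h1 h2' h3]]; exists a, w.
have main : forall k a w, #|Zset a w| <= k -> e r a -> e a w -> ~~ e r w ->
    exists a w, [/\ e r a, e a w, ~~ e r w & forall z, z != a -> z != w -> R2 a w z].
  elim=> [|k IH] a w hk era eaw nrw;
    (case: (set_0Vmem (Zset a w)) => [Z0|[z0 z0Z]];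
      [exists a, w; split => // z za zw; apply/negPn/negP => nR;
       have zZ : z \in Zset a w; [by rewrite inE za zw nR |
       by move/setP: Z0 => /(_ z); rewrite zZ inE] | ]).
    have : 0 < #|Zset a w| by apply/card_gt0P; exists z0.
    by rewrite ltnNge hk.
  have [z1 [eaz1 nrz1 prop]] := shrink hr h2 era eaw nrw z0Z.
  apply: (IH a z1) => //.
  by rewrite -ltnS (leq_trans (proper_card prop) hk).
exact: (main _ a0 w0 (leqnn _)).
Qed.

End Pair.

Section Contr.
Variables (V : finType) (e : rel V) (r a w : V).

Definition contr : rel V := fun x y =>
  ((y != w) && (x != w) && (e x y || (x == a) && e w y)) || ((x == r) && (y == w)).

Hypotheses (hr : rooted_digraph e r) (era : e r a) (eaw : e a w) (nrw : ~~ e r w).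

Let loopl : forall x, ~~ e x x. Proof. by case: hr. Qed.
Let nor : forall u, ~~ e u r. Proof. by case: hr. Qed.
Let nin : forall x y, x != r -> e r y -> ~~ e x y. Proof. by case: hr. Qed.
Let ra : r != a. Proof. by apply/eqP => ra; move: (loopl r); rewrite {2}ra era. Qed.
Let rw : r != w. Proof. by apply/eqP => rw; move: (nor a); rewrite rw eaw. Qed.
Let aw : a != w. Proof. by apply/eqP => aw; move: (loopl a); rewrite {2}aw eaw. Qed.
Let nwa : ~~ e w a. Proof. by apply: nin era; rewrite eq_sym. Qed.

Lemma contr_r y : contr r y = e r y || (y == w).
Proof.
rewrite /contr eqxx (negbTE ra) rw /= andbT orbF.
by case: eqVneq => [->|//]; rewrite (negbTE nrw).
Qed.

Lemma contr_rooted : rooted_digraph contr r.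
Proof.
split.
- move=> x; rewrite /contr negb_or (negbTE (loopl x)) /=; apply/andP; split.
    by have [->|_] := eqVneq x a; rewrite ?(negbTE nwa) /= ?andbF.
  by apply/negP => /andP[/eqP-> /eqP rw']; move: rw; rewrite rw' eqxx.
- move=> u; rewrite /contr negb_or (negbTE (nor u)) (negbTE (nor w)) andbF /=.
  by rewrite andbF (negbTE rw) andbF.
- move=> x y xr; rewrite contr_r => /orP[ery|/eqP->].
    have yw : y != w by apply: contraNneq nrw => <-.
    by rewrite /contr (negbTE (nin xr ery)) (negbTE (nin _ ery)) ?andbF /= ?(negbTE xr) // eq_sym.
  by rewrite /contr eqxx /= andbT.
- case: hr => _ _ _ h; apply: leq_trans h _; apply: subset_leq_card.
  by apply/subsetP => y; rewrite !inE contr_r => ->.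
Qed.

Lemma contr_count :
  #|[set y | (y != r) && ~~ contr r y]| < #|[set y | (y != r) && ~~ e r y]|.
Proof.
apply: proper_card; apply/properP; split.
  by apply/subsetP => y; rewrite !inE contr_r negb_or => /andP[-> /andP[->]].
by exists w; rewrite !inE ?contr_r ?eqxx ?orbT ?andbF // eq_sym rw.
Qed.

Lemma contr_2conn : two_connected e r ->
  (forall z, z != a -> z != w -> R2 e r a w z) -> two_connected contr r.
Proof.
move=> h2 H S hS [rS [z [zS nc]]]; apply: (negP nc).
have [zw|zw] := eqVneq z w.
  subst z; apply: connect1; by rewrite /del_rel /= contr_r eqxx orbT rS zS.
have [aS|aS] := boolP (a \in S).
  have Sa : forall x, x \in S -> x = a.
    by move=> x xS; move/card_le1_eqP: hS => /(_ a x aS xS).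
  have za : z != a by apply: contraNneq zS => ->.
  apply: (@conn_ind _ (del_rel e [set a; w]) (fun v => connect (del_rel contr S) r v) r z) => //.
  - move=> u v /= cu /and3P[euv]; rewrite !inE !negb_or => /andP[ua uw] /andP[va vw].
    apply: connect_trans cu (connect1 _); rewrite /del_rel /= /contr euv uw vw /=.
    by apply/andP; split; apply/negP => /Sa /eqP; rewrite ?(negbTE ua) ?(negbTE va).
  - exact: H.
suff /orP[//|/eqP] : connect (del_rel contr S) r z || (z == w) by move=> zw'; rewrite zw' eqxx in zw.
apply: (@conn_ind _ (del_rel e S) (fun v => connect (del_rel contr S) r v || (v == w)) r z).
- by rewrite /= connect0.
- move=> u v /= Pu /and3P[euv uS vS].
  have [vw|vw] := eqVneq v w; first by rewrite orbT.
  rewrite orbF.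
  have [uw|uw] := eqVneq u w.
    subst u; apply: (connect_trans (y := a)).
      by apply: connect1; rewrite /del_rel /= contr_r era rS aS.
    by apply: connect1; rewrite /del_rel /= /contr vw aw eqxx euv orbT aS vS.
  move: Pu; rewrite (negbTE uw) orbF => cu.
  by apply: connect_trans cu (connect1 _); rewrite /del_rel /= /contr vw uw euv uS vS.
- by apply: reach.
Qed.

Lemma transfer s' : two_connected e r -> rr_numbering contr r s' ->
  exists sigma, rr_numbering e r sigma.
Proof.
move=> h2 [inj' val'].
have [u /andP[ua euw]] : exists u, (u != a) && e u w.
  apply/existsP.
  suff : (w != w) || [exists u, (u != a) && e u w] by rewrite eqxx.
  apply: (@conn_ind _ (del_rel e [set a]) (fun v => (v != w) || [exists u, (u != a) && e u w]) r w).
  - by rewrite /= rw.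
  - move=> x v /= _ /and3P[exv]; rewrite !inE => xa _.
    have [vw|//] := eqVneq v w; rewrite /= -vw.
    by apply/existsP; exists x; rewrite xa exv.
  - by apply: reach; rewrite ?cards1 ?inE // eq_sym.
have ur : u != r by apply: contraNneq nrw => <-.
have uw : u != w by apply/eqP => h; move: (loopl u); rewrite {2}h euw.
pose sigma x := if x == w then (if s' u < s' a then 3 * s' a - 1 else 3 * s' a + 1)
                else 3 * s' x.
have sw : sigma w = (if s' u < s' a then 3 * s' a - 1 else 3 * s' a + 1) by rewrite /sigma eqxx.
have sx : forall x, x != w -> sigma x = 3 * s' x by move=> x xw; rewrite /sigma (negbTE xw).
have ar : a != r by rewrite eq_sym.
exists sigma; split.
  move=> x y xr yr.
  have [->|xw] := eqVneq x w; have [->|yw] := eqVneq y w => //.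
  - by rewrite sw sx // => /L1.
  - by rewrite sw sx // => /esym/L1.
  - by rewrite !sx // => /L6 h; apply: inj'.
move=> x xr; case: (boolP (e r x)) => [erx|nrx]; first by left.
right; have [->|xw] := eqVneq x w.
  have sua : s' u != s' a by apply/eqP => /(inj' _ _ ur ar) /eqP; rewrite (negbTE ua).
  case: (ltngtP (s' u) (s' a)) => h.
  - by exists u, a; split => //; rewrite sw sx // sx //; exact: L4.
  - by exists a, u; split => //; rewrite sw sx // sx //; exact: L5.
  - by rewrite h eqxx in sua.
have ncx : ~~ contr r x by rewrite contr_r negb_or nrx xw.
have help : forall t, contr t x -> exists t', [/\ t' != r, e t' x,
    (s' t < s' x -> sigma t' < sigma x) & (s' x < s' t -> sigma x < sigma t')].
  move=> t; rewrite /contr xw /= (negbTE xw) andbF orbF => /andP[tw /orP[etx|/andP[/eqP -> ewx]]].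
    exists t; split => //.
    - by apply/eqP => h; move: nrx; rewrite -h etx.
    - by rewrite !sx //; exact: L7.
    - by rewrite !sx //; exact: L7.
  exists w; split => //; first by rewrite eq_sym.
    by rewrite sw sx //; exact: L2.
  by rewrite sw sx //; exact: L3.
case: (val' x xr) => [c|[u' [v' [_ _ eu ev /andP[l1 l2]]]]]; first by rewrite c in ncx.
have [t1 [t1r et1 h1 _]] := help _ eu.
have [t2 [t2r et2 _ h2']] := help _ ev.
by exists t1, t2; split => //; rewrite h1 // h2'.
Qed.

End Contr.

Lemma base (V : finType) (e : rel V) (r : V) :
  (forall y, y != r -> e r y) -> exists sigma, rr_numbering e r sigma.
Proof.
move=> H; exists (fun x => nat_of_ord (enum_rank x)); split.
  by move=> x y _ _ /ord_inj /enum_rank_inj.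
by move=> x xr; left; apply: H.
Qed.

Lemma main_ind (V : finType) (r : V) n : forall e : rel V,
  #|[set y | (y != r) && ~~ e r y]| <= n -> rooted_digraph e r -> two_connected e r ->
  exists sigma, rr_numbering e r sigma.
Proof.
elim: n => [|n IH] e hn hr h2;
  (case: (boolP [exists y, (y != r) && ~~ e r y]) => [/existsP ex|nex];
   [ | by apply: base => y yr; move/existsPn: nex => /(_ y); rewrite yr /= negbK ]).
  case: ex => y hy.
  have : 0 < #|[set y | (y != r) && ~~ e r y]| by apply/card_gt0P; exists y; rewrite inE.
  by rewrite ltnNge hn.
have [a [w [era eaw nrw H]]] := good_pair hr h2 ex.
have hc : #|[set y | (y != r) && ~~ contr e r a w r y]| <= n.
  by rewrite -ltnS (leq_trans (contr_count hr era eaw nrw) hn).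
have [s' hs'] := IH (contr e r a w) hc (contr_rooted hr era eaw nrw) (contr_2conn hr era eaw nrw h2 H).
exact: (transfer hr era eaw nrw h2 hs').
Qed.

Theorem lemma1 (V : finType) (e : rel V) (r : V) :
  rooted_digraph e r -> two_connected e r ->
  exists sigma : V -> nat, rr_numbering e r sigma.
Proof.
move=> hr h2; exact: (main_ind (leqnn _) hr h2).
Qed.
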